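(* Let $\Pi=(\iota,\tau,\beta)$ be a safety problem. If $\Pi$ has a proof in the incremental forward proof system $\mathbf{FI}$, then $\Pi$ is safe.
   Context: A first-order vocabulary $\Sigma$ consists of constant, function and relation symbols; $\Sigma'=\{a' : a\in\Sigma\}$ is a disjoint copy of it, and for a formula $\varphi$ over $\Sigma$, $\varphi'$ denotes $\varphi$ with every symbol of $\Sigma$ replaced by its primed copy. A state is a first-order structure over $\Sigma$. A safety problem is a triple $(\iota,\tau,\beta)$, where $\iota$ (initial states) and $\beta$ (bad states) are closed formulas over $\Sigma$ and $\tau$ (transitions) is a closed formula over $\Sigma\uplus\Sigma'$. A pair of states $(s,t)$ over a common domain is a transition if the structure over $\Sigma\uplus\Sigma'$ interpreting $\Sigma$ as in $s$ and $\Sigma'$ as in $t$ satisfies $\tau$. A trace is a finite sequence of states over a common domain in which every two consecutive states form a transition. The problem is safe if there is no trace $s_0,\dots,s_k$ with $s_0\models\iota$ and $s_k\models\beta$. Throughout, $A\Rightarrow B$ means that the implication $A\to B$ is valid. Proofs: the statements of a proof system are safety problems. A proof of $\Pi$ in a system is a finite tree whose nodes are safety problems, whose root is $\Pi$, and in which each node together with its children is an instance of one of the system's inference rules, with side conditions valid. The system $\mathbf{FI}$ has the following rules, where $\varphi$ ranges over closed formulas over $\Sigma$: (Ind): no premises; conclusion $(\iota,\tau,\neg\varphi)$; side conditions $\iota\Rightarrow\varphi$ and $\varphi\wedge\tau\Rightarrow\varphi'$. (Cons): premise $(\iota,\tau,\neg\varphi)$; conclusion $(\iota,\tau,\beta)$;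 side condition $\varphi\Rightarrow\neg\beta$. (Inc): premises $(\iota,\tau,\neg\varphi)$ and $(\iota\wedge\varphi,\ \tau\wedge\varphi\wedge\varphi',\ \beta\wedge\varphi)$; conclusion $(\iota,\tau,\beta)$. *)

(* Defs.v *)
From Stdlib Require Import Arith Fin.

Record vocab : Type := Vocab {
  fsym : Type;               (* function symbols (incl. constants) *)
  rsym : Type;
  far  : fsym -> nat;
  rar  : rsym -> nat
}.

(** Sigma ⊎ Sigma' : [inl a] is a, [inr a] is its primed copy a'. *)
Definition dbl (S : vocab) : vocab :=
  {| fsym := fsym S + fsym S;
     rsym := rsym S + rsym S;
     far := fun g => match g with inl f | inr f => far S f end;
     rar := fun g => match g with inl r | inr r => rar S r end |}.

Inductive term (S : vocab) : Type :=
| Var : nat -> term S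
| App : forall f : fsym S, (Fin.t (far S f) -> term S) -> term S.

Inductive formula (S : vocab) : Type :=
| FFalse : formula S
| FTrue  : formula S
| FRel   : forall r : rsym S, (Fin.t (rar S r) -> term S) -> formula S
| FEq    : term S -> term S -> formula S
| FNot   : formula S -> formula S
| FAnd   : formula S -> formula S -> formula S
| FOr    : formula S -> formula S -> formula S
| FImp   : formula S -> formula S -> formula S
| FAll   : nat -> formula S -> formula S
| FEx    : nat -> formula S -> formula S.

Arguments Var {S} _.
Arguments App {S} _ _.
Arguments FFalse {S}.
Arguments FTrue {S}.
Arguments FRel {S} _ _.
Arguments FEq {S} _ _.
Arguments FNot {S} _.
Arguments FAnd {S} _ _.
Arguments FOr {S} _ _.
Arguments FImp {S} _ _.
Arguments FAll {S} _ _.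
Arguments FEx {S} _ _.

Fixpoint term_free {S} (x : nat) (t : term S) : Prop :=
  match t with
  | Var y => x = y
  | App f a => exists i, term_free x (a i)
  end.

Fixpoint free {S} (x : nat) (p : formula S) : Prop :=
  match p with
  | FFalse | FTrue => False
  | FRel r a => exists i, term_free x (a i)
  | FEq t u => term_free x t \/ term_free x u
  | FNot q => free x q
  | FAnd q r | FOr q r | FImp q r => free x q \/ free x r
  | FAll y q | FEx y q => x <> y /\ free x q
  end.

Definition closed {S} (p : formula S) : Prop := forall x, ~ free x p.

(** Renaming every symbol of Sigma: [b = false] gives phi as a formula over
    Sigma ⊎ Sigma' (unprimed), [b = true] gives phi' (primed). *)
Fixpoint term_lift {S} (b : bool) (t : term S) : term (dbl S) :=
  match t with
  | Var x => Var x
  | App f a =>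
      if b then @App (dbl S) (inr f) (fun i => term_lift b (a i))
      else @App (dbl S) (inl f) (fun i => term_lift b (a i))
  end.

Fixpoint lift {S} (b : bool) (p : formula S) : formula (dbl S) :=
  match p with
  | FFalse => FFalse
  | FTrue => FTrue
  | FRel r a =>
      if b then @FRel (dbl S) (inr r) (fun i => term_lift b (a i))
      else @FRel (dbl S) (inl r) (fun i => term_lift b (a i))
  | FEq t u => FEq (term_lift b t) (term_lift b u)
  | FNot q => FNot (lift b q)
  | FAnd q r => FAnd (lift b q) (lift b r)
  | FOr q r => FOr (lift b q) (lift b r)
  | FImp q r => FImp (lift b q) (lift b r)
  | FAll y q => FAll y (lift b q)
  | FEx y q => FEx y (lift b q)
  end.

Definition unprimed {S} (p : formula S) : formula (dbl S) := lift false p.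
Definition primed {S} (p : formula S) : formula (dbl S) := lift true p.

Record structure (S : vocab) (D : Type) : Type := Struct {
  fint : forall f : fsym S, (Fin.t (far S f) -> D) -> D;
  rint : forall r : rsym S, (Fin.t (rar S r) -> D) -> Prop
}.
Arguments fint {S D} _ _ _.
Arguments rint {S D} _ _ _.

Definition upd {D} (env : nat -> D) (x : nat) (d : D) : nat -> D :=
  fun y => if Nat.eqb y x then d else env y.

Fixpoint teval {S D} (M : structure S D) (env : nat -> D) (t : term S) : D :=
  match t with
  | Var x => env x
  | App f a => fint M f (fun i => teval M env (a i))
  end.

Fixpoint eval {S D} (M : structure S D) (env : nat -> D) (p : formula S)
  : Prop :=
  match p with
  | FFalse => False
  | FTrue => True
  | FRel r a => rint M r (fun i => teval M env (a i))
  | FEq t u => teval M env t = teval M env u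
  | FNot q => ~ eval M env q
  | FAnd q r => eval M env q /\ eval M env r
  | FOr q r => eval M env q \/ eval M env r
  | FImp q r => eval M env q -> eval M env r
  | FAll y q => forall d : D, eval M (upd env y d) q
  | FEx y q => exists d : D, eval M (upd env y d) q
  end.

Definition models {S D} (M : structure S D) (p : formula S) : Prop :=
  forall env : nat -> D, eval M env p.

(** A => B : the implication A -> B is valid (true in every structure,
    over every nonempty domain). *)
Definition implies {S} (A B : formula S) : Prop :=
  forall (D : Type), inhabited D ->
    forall M : structure S D, models M (FImp A B).

Definition pair_struct {S D} (s t : structure S D) : structure (dbl S) D :=
  {| fint := fun g =>
       match g as g0 return (Fin.t (far (dbl S) g0) -> D) -> D with
       | inl f => fint s f
       | inr f => fint t f
       end;
     rint := fun g =>
       match g as g0 return (Fin.t (rar (dbl S) g0) -> D) -> Prop with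
       | inl r => rint s r
       | inr r => rint t r
       end |}.

Definition transition {S D} (tau : formula (dbl S)) (s t : structure S D)
  : Prop := models (pair_struct s t) tau.

Definition safe {Sg : vocab} (iota : formula Sg) (tau : formula (dbl Sg))
  (beta : formula Sg) : Prop :=
  forall (D : Type), inhabited D ->
  forall (k : nat) (s : nat -> structure Sg D),
    models (s 0) iota ->
    (forall i, i < k -> transition tau (s i) (s (Datatypes.S i))) ->
    ~ models (s k) beta.

Inductive FI_provable {S : vocab}
  : formula S -> formula (dbl S) -> formula S -> Prop :=
| FI_Ind : forall iota tau phi,
    closed phi ->
    implies iota phi ->
    implies (FAnd (unprimed phi) tau) (primed phi) ->
    FI_provable iota tau (FNot phi)
| FI_Cons : forall iota tau beta phi,
    closed phi ->
    FI_provable iota tau (FNot phi) ->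
    implies phi (FNot beta) ->
    FI_provable iota tau beta
| FI_Inc : forall iota tau beta phi,
    closed phi ->
    FI_provable iota tau (FNot phi) ->
    FI_provable (FAnd iota phi)
                (FAnd tau (FAnd (unprimed phi) (primed phi)))
                (FAnd beta phi) ->
    FI_provable iota tau beta.

(* Main.v *)
Require Import Defs.
From Stdlib Require Import Classical FunctionalExtensionality Arith.

Lemma teval_coinc {S D} (M : structure S D) (t : term S) :
  forall env env', (forall x, term_free x t -> env x = env' x) ->
  teval M env t = teval M env' t.
Proof.
  induction t as [y|f a IH]; intros env env' H; simpl.
  - apply H; reflexivity.
  - f_equal; apply functional_extensionality; intro i.
    apply IH; intros x Hx; apply H; exists i; exact Hx.
Qed.

Lemma eval_coinc {S D} (M : structure S D) (p : formula S) :
  forall env env', (forall x, free x p -> env x = env' x) ->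
  (eval M env p <-> eval M env' p).
Proof.
  induction p; intros env env' H; simpl in *.
  - tauto.
  - tauto.
  - replace (fun i => teval M env (t i)) with (fun i => teval M env' (t i)).
    + tauto.
    + apply functional_extensionality; intro i; symmetry.
      apply teval_coinc; intros x Hx; apply H; exists i; exact Hx.
  - rewrite (teval_coinc M t env env'), (teval_coinc M t0 env env'); [tauto| |];
      intros x Hx; apply H; tauto.
  - rewrite (IHp env env' H); tauto.
  - rewrite (IHp1 env env'), (IHp2 env env'); [tauto| |]; intros x Hx; apply H; tauto.
  - rewrite (IHp1 env env'), (IHp2 env env'); [tauto| |]; intros x Hx; apply H; tauto.
  - rewrite (IHp1 env env'), (IHp2 env env'); [tauto| |]; intros x Hx; apply H; tauto.
  - split; intros Hd d.
    + refine (proj1 (IHp (upd env n d) (upd env' n d) _) _); [|apply Hd].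
      intros x Hx; unfold upd; destruct (Nat.eqb x n) eqn:E; [reflexivity|].
      apply H; split; [apply Nat.eqb_neq; exact E| exact Hx].
    + refine (proj2 (IHp (upd env n d) (upd env' n d) _) _); [|apply Hd].
      intros x Hx; unfold upd; destruct (Nat.eqb x n) eqn:E; [reflexivity|].
      apply H; split; [apply Nat.eqb_neq; exact E| exact Hx].
  - split; intros [d Hd]; exists d.
    + refine (proj1 (IHp (upd env n d) (upd env' n d) _) _); [|apply Hd].
      intros x Hx; unfold upd; destruct (Nat.eqb x n) eqn:E; [reflexivity|].
      apply H; split; [apply Nat.eqb_neq; exact E| exact Hx].
    + refine (proj2 (IHp (upd env n d) (upd env' n d) _) _); [|apply Hd].
      intros x Hx; unfold upd; destruct (Nat.eqb x n) eqn:E; [reflexivity|].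
      apply H; split; [apply Nat.eqb_neq; exact E| exact Hx].
Qed.

Lemma closed_eval {S D} (M : structure S D) (p : formula S) env env' :
  closed p -> eval M env p -> eval M env' p.
Proof.
  intros Hc. apply (eval_coinc M p env env'). intros x Hx; exfalso; exact (Hc x Hx).
Qed.

Lemma teval_lift {S D} (s t : structure S D) (b : bool) (u : term S) env :
  teval (pair_struct s t) env (term_lift b u) = teval (if b then t else s) env u.
Proof.
  induction u as [y|f a IH]; simpl.
  - destruct b; reflexivity.
  - destruct b; simpl; f_equal; apply functional_extensionality; intro i; apply IH.
Qed.

Lemma eval_lift {S D} (s t : structure S D) (b : bool) (p : formula S) :
  forall env, eval (pair_struct s t) env (lift b p) <-> eval (if b then t else s) env p.
Proof.
  induction p; intro env; simpl.
  - destruct b; tauto.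
  - destruct b; tauto.
  - assert (E : (fun i => teval (pair_struct s t) env (term_lift b (t0 i)))
               = (fun i => teval (if b then t else s) env (t0 i))).
    { apply functional_extensionality; intro i; apply teval_lift. }
    destruct b; simpl in *; rewrite E; tauto.
  - rewrite !teval_lift; tauto.
  - rewrite IHp; tauto.
  - rewrite IHp1, IHp2; tauto.
  - rewrite IHp1, IHp2; tauto.
  - rewrite IHp1, IHp2; tauto.
  - split; intros H d; apply IHp, H.
  - split; intros [d H]; exists d; apply IHp, H.
Qed.

Lemma sound {Sg : vocab} iota tau beta :
  @FI_provable Sg iota tau beta -> safe iota tau beta.
Proof.
  induction 1 as [iota tau phi Hc Hi Ht | iota tau beta phi Hc Hp IH Himp
                 | iota tau beta phi Hc Hp IH1 Hq IH2];
    intros D [d0] k s H0 Htr.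
  - assert (All : forall i, i <= k -> models (s i) phi).
    { induction i; intros Hik env.
      - apply (Hi D (inhabits d0) (s 0) env), H0.
      - assert (Hm := IHi ltac:(auto with arith)).
        assert (Ht' := Ht D (inhabits d0) (pair_struct (s i) (s (Datatypes.S i))) env).
        simpl in Ht'. apply (eval_lift (s i) (s (Datatypes.S i)) true) in Ht'; [exact Ht'|].
        split.
        + apply (eval_lift _ _ false), Hm.
        + apply Htr; auto with arith. }
    intro Hn. apply (Hn (fun _ => d0)). apply All; auto.
  - intro Hb. apply (IH D (inhabits d0) k s H0 Htr).
    intros env Hphi. apply (Himp D (inhabits d0) (s k) env Hphi), Hb.
  - assert (All : forall i, i <= k -> models (s i) phi).
    { intros i Hik env. apply NNPP; intro Hn.
      apply (IH1 D (inhabits d0) i s H0).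
      - intros j Hj; apply Htr; eapply Nat.lt_le_trans; eauto.
      - intros env' Hp'. apply Hn. apply (closed_eval _ _ env' env Hc Hp'). }
    intro Hb. apply (IH2 D (inhabits d0) k s).
    + intro env; split; [apply H0|apply All; auto with arith].
    + intros i Hi env; split; [apply Htr; auto|split].
      * apply (eval_lift _ _ false), All; auto with arith.
      * apply (eval_lift _ _ true), All; auto with arith.
    + intro env; split; [apply Hb|apply All; auto].
Qed.

Theorem theorem4p4 (Sg : vocab) (iota : formula Sg) (tau : formula (dbl Sg))
  (beta : formula Sg) :
  closed iota -> closed tau -> closed beta ->
  FI_provable iota tau beta ->
  safe iota tau beta.
Proof.
  intros _ _ _ H; apply sound, H.
Qed.
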